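(* Assume the standing conventions of the context and suppose $\mathcal D_{Z,Z'}\neq\emptyset$. Let $\Psi'$ be a consecutive pair in $Z'_{\mathrm I}$ such that $(Z,\Lambda_{\Psi'})\in\mathcal D_{Z,Z'}$, and let $N\subset Z'_{\mathrm I}$ with $|N\cap\Psi'|=1$. Then there is no $\Lambda\in\overline{\mathcal S}_Z$ with $(\Lambda,\Lambda_N)\in\overline{\mathcal B}^+_{Z,Z'}$.
   Context: A symbol is an array $\Lambda=\binom{a'_1,\ldots,a'_{m_1}}{b'_1,\ldots,b'_{m_2}}$ of two strictly decreasing finite sequences of nonnegative integers (top row, bottom row); its defect is $\mathrm{def}(\Lambda)=m_1-m_2$. Standing assumptions: $Z=\binom{a_1,\ldots,a_{m+1}}{b_1,\ldots,b_m}$ is a special symbol of defect $1$, i.e. $a_1\ge b_1\ge a_2\ge b_2\ge\cdots\ge b_m\ge a_{m+1}$; $Z'=\binom{c_1,\ldots,c_{m'}}{d_1,\ldots,d_{m'}}$ is a special symbol of defect $0$, i.e. $c_1\ge d_1\ge c_2\ge d_2\ge\cdots\ge c_{m'}\ge d_{m'}$; and $m'\in\{m,m+1\}$. For a symbol $Y$, $Y_{\mathrm I}$ is the set of entries of $Y$ occurring in exactly one row. For $M\subset Z_{\mathrm I}$, $\Lambda_M$ is the symbol obtained from $Z$ by moving every entry of $M$ to the other row (rows re-sorted decreasingly); for $N\subset Z'_{\mathrm I}$, $\Lambda_N$ is obtained from $Z'$ in the same way. $\overline{\mathcal S}_Z=\{\Lambda_M: M\subset Z_{\mathrm I}\}$,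 $\overline{\mathcal S}_{Z'}=\{\Lambda_N:N\subset Z'_{\mathrm I}\}$; $\mathcal S_{Z,1}$ (resp. $\mathcal S_{Z',0}$) is the set of elements of $\overline{\mathcal S}_Z$ of defect $1$ (resp. of $\overline{\mathcal S}_{Z'}$ of defect $0$). A consecutive pair in $Z'_{\mathrm I}$ is a two-element subset $\{c_k,d_l\}\subset Z'_{\mathrm I}$, written $\binom{c_k}{d_l}$, with $l\in\{k-1,k\}$; a consecutive pair in $Z_{\mathrm I}$ is $\{a_k,b_l\}\subset Z_{\mathrm I}$, written $\binom{a_k}{b_l}$, with $l\in\{k-1,k\}$. Relation $\overline{\mathcal B}^+_{Z,Z'}\subset\overline{\mathcal S}_Z\times\overline{\mathcal S}_{Z'}$: for $\Lambda=\binom{a'_1,\ldots,a'_{m_1}}{b'_1,\ldots,b'_{m_2}}\in\overline{\mathcal S}_Z$ and $\Lambda'=\binom{c'_1,\ldots,c'_{m'_1}}{d'_1,\ldots,d'_{m'_2}}\in\overline{\mathcal S}_{Z'}$, $(\Lambda,\Lambda')\in\overline{\mathcal B}^+_{Z,Z'}$ iff $\mathrm{def}(\Lambda')=1-\mathrm{def}(\Lambda)$ and: if $m'=m$, $a'_i>d'_i\ge a'_{i+1}$ for $1\le i\le m'_2$ and $b'_{i-1}>c'_i\ge b'_i$ for $1\le i\le m'_1$; if $m'=m+1$, $a'_i\ge d'_i>a'_{i+1}$ for $1\le i\le m'_2$ and $b'_{i-1}\ge c'_i>b'_i$ for $1\le i\le m'_1$; here $b'_0=+\infty$ and nonexistent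 entries $a'_j,b'_j$ beyond the row lengths are $-\infty$. Then $\mathcal D_{Z,Z'}=\overline{\mathcal B}^+_{Z,Z'}\cap(\mathcal S_{Z,1}\times\mathcal S_{Z',0})$. *)

(* Defs.v *)
From mathcomp Require Import all_boot all_order all_algebra.
Set Implicit Arguments. Unset Strict Implicit. Unset Printing Implicit Defensive.
Import GRing.Theory Num.Theory.

(* A symbol: (top row, bottom row); rows are lists of naturals, listed
   in decreasing order.  Indices are 0-based in Rocq (entry i here is
   entry i+1 in the paper). *)
Definition symbol := (seq nat * seq nat)%type.

Definition sdec (s : seq nat) : bool := sorted (fun x y => y < x) s.
Definition is_symbol (Y : symbol) : bool := sdec Y.1 && sdec Y.2.

Definition defect (Y : symbol) : int := ((size Y.1)%:Z - (size Y.2)%:Z)%R.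

(* Z = (a_1..a_{m+1} ; b_1..b_m) special of defect 1 *)
Definition special1 (Z : symbol) : Prop :=
  is_symbol Z /\ size Z.1 = (size Z.2).+1 /\
  forall i, i < size Z.2 ->
    nth 0 Z.2 i <= nth 0 Z.1 i /\ nth 0 Z.1 i.+1 <= nth 0 Z.2 i.

(* Z' = (c_1..c_m' ; d_1..d_m') special of defect 0 *)
Definition special0 (Z' : symbol) : Prop :=
  is_symbol Z' /\ size Z'.1 = size Z'.2 /\
  forall i, i < size Z'.2 ->
    nth 0 Z'.2 i <= nth 0 Z'.1 i /\
    (i.+1 < size Z'.1 -> nth 0 Z'.1 i.+1 <= nth 0 Z'.2 i).

Definition symI (Y : symbol) (x : nat) : bool := (x \in Y.1) (+) (x \in Y.2).

Definition move (Y : symbol) (M : seq nat) : symbol :=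
  (sort (fun x y => y <= x)
     ([seq x <- Y.1 | x \notin M] ++ [seq x <- Y.2 | x \in M]),
   sort (fun x y => y <= x)
     ([seq x <- Y.2 | x \notin M] ++ [seq x <- Y.1 | x \in M])).

Definition in_Sbar (Y L : symbol) : Prop :=
  exists M : seq nat, (forall x, x \in M -> symI Y x) /\ L = move Y M.

(* entries with nonexistent ones = -infinity (encoded as None) *)
Definition ent (s : seq nat) (i : nat) : option nat :=
  if i < size s then Some (nth 0 s i) else None.

Definition gtE (x y : option nat) : bool :=
  match x, y with
  | Some a, Some b => b < a
  | Some _, None => true
  | None, _ => false
  end.
Definition geE (x y : option nat) : bool :=
  match x, y with
  | Some a, Some b => b <= a
  | _, None => true
  | None, Some _ => false
  end.

Definition condA (L L' : symbol) : Prop :=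
  (forall i, i < size L'.2 ->
     gtE (ent L.1 i) (ent L'.2 i) /\ geE (ent L'.2 i) (ent L.1 i.+1)) /\
  (forall i, i < size L'.1 ->
     (i = 0 \/ gtE (ent L.2 i.-1) (ent L'.1 i)) /\ geE (ent L'.1 i) (ent L.2 i)).

Definition condB (L L' : symbol) : Prop :=
  (forall i, i < size L'.2 ->
     geE (ent L.1 i) (ent L'.2 i) /\ gtE (ent L'.2 i) (ent L.1 i.+1)) /\
  (forall i, i < size L'.1 ->
     (i = 0 \/ geE (ent L.2 i.-1) (ent L'.1 i)) /\ gtE (ent L'.1 i) (ent L.2 i)).

(* (L, L') in \overline{B}^+_{Z,Z'};  m = size Z.2, m' = size Z'.1 *)
Definition Bplus (Z Z' L L' : symbol) : Prop :=
  defect L' = (1 - defect L)%R /\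
  (size Z'.1 = size Z.2 -> condA L L') /\
  (size Z'.1 = (size Z.2).+1 -> condB L L').

Definition inD (Z Z' L L' : symbol) : Prop :=
  Bplus Z Z' L L' /\
  (in_Sbar Z L /\ defect L = 1%R) /\ (in_Sbar Z' L' /\ defect L' = 0%R).

(* consecutive pair (c_k ; d_l) in Z'_I, l in {k-1, k} (0-based indices) *)
Definition consec_pair (Z' : symbol) (k l : nat) : Prop :=
  k < size Z'.1 /\ l < size Z'.2 /\ (l = k \/ l.+1 = k) /\
  symI Z' (nth 0 Z'.1 k) /\ symI Z' (nth 0 Z'.2 l).

Definition pairseq (Z' : symbol) (k l : nat) : seq nat :=
  [:: nth 0 Z'.1 k; nth 0 Z'.2 l].

(* Main.v *)
Require Import Defs.
From mathcomp Require Import all_boot all_order all_algebra.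
From mathcomp Require Import zify.

Definition ge_rel := (fun x y : nat => y <= x).

Lemma cnt_pre {p : pred nat} {s i} :
  sorted ge_rel s -> (forall y z, p y -> y <= z -> p z) ->
  i < size s -> p (nth 0 s i) = (i < count p s).
Proof.
move=> ss up; elim: s ss i => [|x s IH] //= ss i hi.
have ss' : sorted ge_rel s by move: ss; case: s {IH hi} => //= y s /andP[].
have mn : all (ge_rel x) s.
  by apply: order_path_min => //; move=> a b c /= h1 h2; apply: leq_trans h2 h1.
case px: (p x).
  case: i hi => [|i] hi //=.
  by rewrite IH // add1n ltnS.
have c0 : count p s = 0.
  apply/eqP; rewrite -leqn0 leqNgt -has_count; apply/hasPn => y ys.
  apply/negP => py; move: (allP mn y ys) => /= hy.
  by rewrite (up _ _ py hy) in px.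
rewrite c0 add0n ltn0; case: i hi => [|i] hi //=.
apply/negP => h; have: p (nth 0 s i) by [].
move=> pn; move: (allP mn _ (mem_nth 0 (hi : i < size s))) => /= hy.
by rewrite (up _ _ pn hy) in px.
Qed.

Lemma cnt_at {p : pred nat} {s j} :
  sorted ge_rel s -> (forall y z, p y -> y <= z -> p z) ->
  (0 < j -> j.-1 < size s /\ p (nth 0 s j.-1)) ->
  (j < size s -> ~~ p (nth 0 s j)) -> count p s = j.
Proof.
move=> ss up h1 h2; case: (ltngtP (count p s) j) => // h.
- have j0 : 0 < j by lia.
  case: (h1 j0) => hs hp.
  by rewrite (cnt_pre ss up hs) in hp; lia.
- have hs : j < size s by have := count_size p s; lia.
  by move: (h2 hs); rewrite (cnt_pre ss up hs) h.
Qed.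
From mathcomp Require Import zify.

Lemma ge_trans : transitive ge_rel.
Proof. by move=> a b c /= h1 h2; apply: leq_trans h2 h1. Qed.

Lemma gt_trans : transitive (fun x y : nat => y < x).
Proof. by move=> a b c /= h1 h2; apply: ltn_trans h2 h1. Qed.

Lemma sorted_nth_ge {s i j} : sorted ge_rel s -> i <= j -> j < size s ->
  nth 0 s j <= nth 0 s i.
Proof.
move=> ss ij js.
have := sorted_leq_nth ge_trans (fun x => leqnn x) 0 ss.
move=> /(_ i j); rewrite !inE => h; apply: h => //; lia.
Qed.

Lemma sorted_nth_gt {s i j} : sorted (fun x y : nat => y < x) s -> i < j -> j < size s ->
  nth 0 s j < nth 0 s i.
Proof.
move=> ss ij js.
have := sorted_ltn_nth gt_trans 0 ss.
move=> /(_ i j); rewrite !inE => h; apply: h => //; lia.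
Qed.

Lemma sdec_ge {s} : sdec s -> sorted ge_rel s.
Proof. by apply: sub_sorted => x y /= h; apply: ltnW. Qed.

Lemma up_lt y : forall a b : nat, y < a -> a <= b -> y < b.
Proof. by move=> a b h1 h2; apply: leq_trans h2. Qed.

Lemma pos {s y} : sorted ge_rel s -> y \in s ->
  count (fun z => y < z) s < size s /\ nth 0 s (count (fun z => y < z) s) = y.
Proof.
move=> ss ys; set j := count _ s.
have i0s : index y s < size s by rewrite index_mem.
have ni := nth_index 0 ys.
have := @cnt_pre (fun z => y < z) s (index y s) ss (@up_lt y) i0s.
rewrite ni ltnn => /esym /negbT; rewrite -leqNgt => ji.
have js : j < size s by lia.
split => //.
have h1 := @cnt_pre (fun z => y < z) s j ss (@up_lt y) js.
rewrite ltnn in h1.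
have h2 := sorted_nth_ge ss ji i0s; rewrite ni in h2.
apply/eqP; rewrite eqn_leq h2 andbT; move/negbT: h1; rewrite -leqNgt //.
Qed.

Lemma move_sorted1 Y M : sorted ge_rel (move Y M).1.
Proof. apply: sort_sorted => x y /=; exact: leq_total. Qed.
Lemma move_sorted2 Y M : sorted ge_rel (move Y M).2.
Proof. apply: sort_sorted => x y /=; exact: leq_total. Qed.

Lemma cnt_split (p : pred nat) (M : seq nat) (s : seq nat) :
  count p (filter (fun x : nat => x \notin M) s) + count p (filter (fun x : nat => x \in M) s) = count p s.
Proof. elim: s => //= x s IH; case: (x \in M) => /=; lia. Qed.

Lemma move_tot (p : pred nat) Y M :
  count p (move Y M).1 + count p (move Y M).2 = count p Y.1 + count p Y.2.
Proof.
rewrite /move /= !count_sort !count_cat.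
rewrite -(cnt_split p M Y.1) -(cnt_split p M Y.2).
by rewrite addnACA [in RHS]addnACA [X in _ = _ + X]addnC.
Qed.

Lemma move_c1 (p : pred nat) Y M :
  count p (move Y M).1 + count (fun z => p z && (z \in M)) Y.1 =
  count p Y.1 + count (fun z => p z && (z \in M)) Y.2.
Proof.
rewrite /move /= !count_sort !count_cat -(cnt_split p M Y.1) !count_filter.
by rewrite -!addnA; congr (_ + _); rewrite addnC.
Qed.

Lemma move_c2 (p : pred nat) Y M :
  count p (move Y M).2 + count (fun z => p z && (z \in M)) Y.2 =
  count p Y.2 + count (fun z => p z && (z \in M)) Y.1.
Proof.
rewrite /move /= !count_sort !count_cat -(cnt_split p M Y.2) !count_filter.
by rewrite -!addnA; congr (_ + _); rewrite addnC.
Qed.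

Lemma mem_move1 Y M x : (x \in (move Y M).1) = ((x \notin M) && (x \in Y.1)) || ((x \in M) && (x \in Y.2)).
Proof. by rewrite /move /= mem_sort mem_cat !mem_filter. Qed.
Lemma mem_move2 Y M x : (x \in (move Y M).2) = ((x \notin M) && (x \in Y.2)) || ((x \in M) && (x \in Y.1)).
Proof. by rewrite /move /= mem_sort mem_cat !mem_filter. Qed.

Lemma cnt_gap s u v : v < u -> u \in s ->
  count (fun z => u < z) s + 1 <= count (fun z => v < z) s.
Proof.
move=> vu; elim: s => //= x s IH; rewrite inE => /orP [/eqP e|h].
- subst x.
  have : count (fun z => u < z) s <= count (fun z => v < z) s.
    by apply: sub_count => z /= h; lia.
  rewrite ltnn vu; lia.
- have := IH h; case: (ltnP u x); case: (ltnP v x) => /=; lia.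
Qed.

Lemma cnt_anti (b : bool) s u v : v <= u ->
  count (fun z => if b then u <= z else u < z) s <= count (fun z => if b then v <= z else v < z) s.
Proof. move=> vu; apply: sub_count => z /=; case: b; lia. Qed.

Lemma cntM0 s u v (M : seq nat) : v < u -> (forall z, (z \in M) = (z == u) || (z == v)) ->
  count (fun z => (u < z) && (z \in M)) s = 0.
Proof.
move=> vu hM; apply/eqP; rewrite -leqn0 leqNgt -has_count; apply/hasPn => z _.
rewrite hM; apply/negP => /andP [h /orP [] /eqP e]; lia.
Qed.

Lemma cntM1 s u v (M : seq nat) : v < u -> (forall z, (z \in M) = (z == u) || (z == v)) ->
  count (fun z => (v < z) && (z \in M)) s = count (pred1 u) s.
Proof.
move=> vu hM; apply: eq_count => z /=; rewrite hM.
case: (eqVneq z u) => [->|ne]; first by rewrite vu.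
case: (eqVneq z v) => [->|ne2]; first by rewrite ltnn.
by rewrite andbF.
Qed.

Lemma ent_some {s i} : i < size s -> ent s i = Some (nth 0 s i).
Proof. by rewrite /ent => ->. Qed.

Lemma gtE_l s i y : gtE (ent s i) (Some y) -> i < size s /\ y < nth 0 s i.
Proof. by rewrite /ent; case: (i < size s). Qed.
Lemma geE_l s i y : geE (ent s i) (Some y) -> i < size s /\ y <= nth 0 s i.
Proof. by rewrite /ent; case: (i < size s). Qed.
Lemma gtE_r s i y : gtE (Some y) (ent s i) -> i < size s -> nth 0 s i < y.
Proof. by rewrite /ent => h hi; move: h; rewrite hi. Qed.
Lemma geE_r s i y : geE (Some y) (ent s i) -> i < size s -> nth 0 s i <= y.
Proof. by rewrite /ent => h hi; move: h; rewrite hi. Qed.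

Definition qp (b : bool) (y z : nat) : bool := if b then y <= z else y < z.

Lemma qp_up b y : forall a c : nat, qp b y a -> a <= c -> qp b y c.
Proof. by rewrite /qp; case: b => a c; lia. Qed.

Lemma bplus_id Z Z' L L' :
  Bplus Z Z' L L' -> (size Z'.1 = size Z.2 \/ size Z'.1 = (size Z.2).+1) ->
  sorted ge_rel L.1 -> sorted ge_rel L.2 -> sorted ge_rel L'.1 -> sorted ge_rel L'.2 ->
  (forall y, y \in L'.2 ->
     count (qp (size Z'.1 == (size Z.2).+1) y) L.1 = count (fun z => y < z) L'.2 + 1) /\
  (forall y, y \in L'.1 ->
     count (qp (size Z'.1 == (size Z.2).+1) y) L.2 = count (fun z => y < z) L'.1).
Proof.
move=> [_ [hA hB]] hs s1 s2 s1' s2'.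
case: hs => hs.
- have -> : (size Z'.1 == (size Z.2).+1) = false by rewrite hs; apply/eqP; lia.
  case: (hA hs) => hb ht; split => y yin.
  + case: (pos s2' yin) => js nj; set j := count _ _ in js nj *.
    case: (hb j js); rewrite (ent_some js) nj => /gtE_l [h1 h2] /geE_r h3.
    apply: (cnt_at s1 (qp_up false y)); rewrite addn1 /qp /=.
    * by move=> _; split.
    * by move=> hj; rewrite -leqNgt; apply: h3.
  + case: (pos s1' yin) => js nj; set j := count _ _ in js nj *.
    case: (ht j js); rewrite (ent_some js) nj => h1 /geE_r h3.
    apply: (cnt_at s2 (qp_up false y)) => [hj|hj].
    * case: h1 => [j0|/gtE_l //]; lia.
    * by rewrite /qp -leqNgt; apply: h3.
- have -> : (size Z'.1 == (size Z.2).+1) = true by apply/eqP.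
  case: (hB hs) => hb ht; split => y yin.
  + case: (pos s2' yin) => js nj; set j := count _ _ in js nj *.
    case: (hb j js); rewrite (ent_some js) nj => /geE_l [h1 h2] /gtE_r h3.
    apply: (cnt_at s1 (qp_up true y)); rewrite addn1 /qp /=.
    * by move=> _; split.
    * by move=> hj; rewrite -ltnNge; apply: h3.
  + case: (pos s1' yin) => js nj; set j := count _ _ in js nj *.
    case: (ht j js); rewrite (ent_some js) nj => h1 /gtE_r h3.
    apply: (cnt_at s2 (qp_up true y)) => [hj|hj].
    * case: h1 => [j0|/geE_l //]; lia.
    * by rewrite /qp -ltnNge; apply: h3.
Qed.

Lemma sp1_bnd Z (p : pred nat) : special1 Z -> (forall y z, p y -> y <= z -> p z) ->
  count p Z.2 <= count p Z.1 <= count p Z.2 + 1.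
Proof.
move=> [/andP [sa sb] [hsz hsp]] up.
have sa' := sdec_ge sa; have sb' := sdec_ge sb.
apply/andP; split.
- rewrite leqNgt; apply/negP => h.
  have hj : count p Z.1 < size Z.2 by have := count_size p Z.2; lia.
  have e1 := cnt_pre sb' up hj; rewrite h in e1.
  have hj1 : count p Z.1 < size Z.1 by lia.
  have e2 := cnt_pre sa' up hj1; rewrite ltnn in e2.
  case: (hsp _ hj) => h1 _.
  by rewrite (up _ _ e1 h1) in e2.
- rewrite leqNgt; apply/negP => h.
  set j := count p Z.2 in h *.
  have hj : j < size Z.2 by have := count_size p Z.1; lia.
  have hj1 : j.+1 < size Z.1 by lia.
  have e1 := cnt_pre sa' up hj1.
  have e2 := cnt_pre sb' up hj; rewrite ltnn in e2.
  have : j.+1 < count p Z.1 by lia.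
  move=> hh; rewrite hh in e1.
  case: (hsp _ hj) => _ h2.
  by rewrite (up _ _ e1 h2) in e2.
Qed.

Lemma sp0_c Z' k : special0 Z' -> k < size Z'.1 -> nth 0 Z'.1 k \notin Z'.2 ->
  count (fun z => nth 0 Z'.1 k < z) Z'.1 = k /\ count (fun z => nth 0 Z'.1 k < z) Z'.2 = k.
Proof.
move=> [/andP [sc sd] [hsz hsp]] hk nk.
have sc' := sdec_ge sc; have sd' := sdec_ge sd.
split.
- apply: (cnt_at sc' (@up_lt _)) => [k0|_]; last by rewrite ltnn.
  split; first lia.
  apply: (sorted_nth_gt sc); lia.
- apply: (cnt_at sd' (@up_lt _)) => [k0|hk2].
  + have hk1 : k.-1 < size Z'.2 by lia.
    split => //.
    case: (hsp _ hk1) => _ /(_ ltac:(lia)).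
    have -> : k.-1.+1 = k by lia.
    rewrite leq_eqVlt => /orP [/eqP e|//].
    by move: nk; rewrite e mem_nth.
  + by case: (hsp _ hk2) => h _; rewrite -leqNgt.
Qed.

Lemma sp0_d Z' l : special0 Z' -> l < size Z'.2 -> nth 0 Z'.2 l \notin Z'.1 ->
  count (fun z => nth 0 Z'.2 l < z) Z'.2 = l /\ count (fun z => nth 0 Z'.2 l < z) Z'.1 = l.+1.
Proof.
move=> [/andP [sc sd] [hsz hsp]] hl nl.
have sc' := sdec_ge sc; have sd' := sdec_ge sd.
split.
- apply: (cnt_at sd' (@up_lt _)) => [k0|_]; last by rewrite ltnn.
  split; first lia.
  apply: (sorted_nth_gt sd); lia.
- apply: (cnt_at sc' (@up_lt _)) => [_|hl2] /=.
  + split; first lia.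
    case: (hsp _ hl) => + _.
    rewrite leq_eqVlt => /orP [/eqP e|//].
    by move: nl; rewrite e mem_nth // hsz.
  + by case: (hsp _ hl) => _ /(_ hl2) h; rewrite -leqNgt.
Qed.

Lemma sdec_uniq {s} : sdec s -> uniq s.
Proof. by apply: (sorted_uniq gt_trans) => x /=; rewrite ltnn. Qed.

Lemma cnt1 (s : seq nat) (u : nat) : uniq s -> count (pred1 u) s = (u \in s).
Proof. move=> us; exact: count_uniq_mem. Qed.

Lemma lam_part (A B Q1 Q2 : seq nat) (b : bool) u v : v < u ->
  (forall y, y \in Q2 -> count (qp b y) A = count (fun z => y < z) Q2 + 1) ->
  (forall y, y \in Q1 -> count (qp b y) B = count (fun z => y < z) Q1) ->
  ((u \in Q1) && (v \in Q1)) || ((u \in Q2) && (v \in Q2)) ->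
  count (qp b u) A + count (qp b u) B + 1 <= count (qp b v) A + count (qp b v) B.
Proof.
move=> vu h2 h1 /orP [/andP [u1 v1]|/andP [u2 v2]].
- have e1 := h1 _ u1; have e2 := h1 _ v1.
  have := cnt_anti b A u v (ltnW vu); have := cnt_gap Q1 u v vu u1.
  rewrite /qp in e1 e2 *; lia.
- have e1 := h2 _ u2; have e2 := h2 _ v2.
  have := cnt_anti b B u v (ltnW vu); have := cnt_gap Q2 u v vu u2.
  rewrite /qp in e1 e2 *; lia.
Qed.

Arguments bplus_id {Z Z' L L'}.
Arguments sp1_bnd {Z p}.
Arguments sp0_c {Z' k}.
Arguments sp0_d {Z' l}.
Arguments lam_part {A B Q1 Q2 b u v}.
Arguments cntM0 s {u v M}.
Arguments cntM1 s {u v M}.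

Lemma arith1 (fau fav fbu fbv FAu FBu FAv FBv k : nat) :
  fau = k + 1 -> fbv = k -> fbu <= fbv -> fau <= fav ->
  fbv <= fav <= fbv + 1 -> fbu <= fau <= fbu + 1 ->
  FAv + FBv = fav + fbv -> FAu + FBu = fau + fbu -> FAu + FBu + 1 <= FAv + FBv -> False.
Proof. move=> *; lia. Qed.

Lemma arith2 (fau fav fbu fbv FAu FBu FAv FBv k : nat) :
  fbu = k + 1 -> fav = k + 1 -> fbu <= fbv -> fau <= fav ->
  fbv <= fav <= fbv + 1 -> fbu <= fau <= fbu + 1 ->
  FAv + FBv = fav + fbv -> FAu + FBu = fau + fbu -> FAu + FBu + 1 <= FAv + FBv -> False.
Proof. move=> *; lia. Qed.
Arguments arith1 {fau fav fbu fbv FAu FBu FAv FBv k}.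
Arguments arith2 {fau fav fbu fbv FAu FBu FAv FBv k}.

Theorem lemma0809 (Z Z' : symbol) (k l : nat) (N : seq nat) :
  special1 Z -> special0 Z' ->
  (size Z'.1 = size Z.2 \/ size Z'.1 = (size Z.2).+1) ->
  (exists L L', inD Z Z' L L') ->
  consec_pair Z' k l ->
  inD Z Z' Z (move Z' (pairseq Z' k l)) ->
  (forall x, x \in N -> symI Z' x) ->
  count (fun x => x \in N) (pairseq Z' k l) = 1 ->
  ~ (exists L, in_Sbar Z L /\ Bplus Z Z' L (move Z' N)).
Proof.
move=> hZ hZ' hsz _ [hk [hl [hkl [sk sl]]]] [hP _] hN hcnt [L [[M' [_ ->]] hQ]].
have [/andP [sc sd] [hsz' hsp']] := hZ'.
have [/andP [sa sb] _] := hZ.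
have uc := sdec_uniq sc; have ud := sdec_uniq sd.
have ckc : nth 0 Z'.1 k \in Z'.1 by apply: mem_nth.
have dld : nth 0 Z'.2 l \in Z'.2 by apply: mem_nth.
have ckd : nth 0 Z'.1 k \notin Z'.2 by move: sk; rewrite /symI ckc.
have dlc : nth 0 Z'.2 l \notin Z'.1 by move: sl; rewrite /symI dld addbT.
have [hP2 hP1] := bplus_id hP hsz (sdec_ge sa) (sdec_ge sb) (move_sorted1 _ _) (move_sorted2 _ _).
have [hQ2 hQ1] := bplus_id hQ hsz (move_sorted1 _ _) (move_sorted2 _ _) (move_sorted1 _ _) (move_sorted2 _ _).
set b := (size Z'.1 == (size Z.2).+1) in hP2 hP1 hQ2 hQ1.
have tot := fun x => move_tot (qp b x) Z M'.
have bnd := fun x => sp1_bnd hZ (qp_up b x).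
have anti : forall s u v, v <= u -> count (qp b u) s <= count (qp b v) s.
  by move=> s u v h; exact: (cnt_anti b s u v h).
rewrite /pairseq /= in hcnt.
have [Gcu Gdu] := sp0_c hZ' hk ckd.
have [Gdv Gcv] := sp0_d hZ' hl dlc.
have hkk : l = k -> nth 0 Z'.2 l <= nth 0 Z'.1 k.
  by move=> e; subst l; case: (hsp' k hl).
have hlk : l.+1 = k -> nth 0 Z'.1 k <= nth 0 Z'.2 l.
  by move=> e; subst k; case: (hsp' l hl) => _; apply.
have hpq : pairseq Z' k l = [:: nth 0 Z'.1 k; nth 0 Z'.2 l] by [].
move: hP2 hP1 hQ2 hQ1.
set ck := nth 0 Z'.1 k in ckc ckd hcnt Gcu Gdu Gdv Gcv hkk hlk hpq *.
set dl := nth 0 Z'.2 l in dld dlc hcnt Gcu Gdu Gdv Gcv hkk hlk hpq *.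
rewrite hpq => hP2 hP1 hQ2 hQ1.
clearbody ck dl; clear hpq.
have nd : dl != ck by apply/eqP => e; move: ckd; rewrite -e dld.
case: hkl => e.
-
  have vu : dl < ck.
    by rewrite ltn_neqAle nd /= (hkk e).
  have hM : forall z, (z \in [:: ck; dl]) = (z == ck) || (z == dl).
    by move=> z; rewrite !inE.
  have e1 := move_c2 (fun z => ck < z) Z' ([:: ck; dl]).
  rewrite (cntM0 _ vu hM) (cntM0 _ vu hM) Gdu in e1.
  have e2 := move_c1 (fun z => dl < z) Z' ([:: ck; dl]).
  rewrite (cntM1 _ vu hM) (cntM1 _ vu hM) cnt1 // cnt1 // ckc (negbTE ckd) Gcv in e2.
  have uP2 : ck \in (move Z' ([:: ck; dl])).2 by rewrite mem_move2 hM eqxx ckc orbT.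
  have vP1 : dl \in (move Z' ([:: ck; dl])).1 by rewrite mem_move1 hM eqxx dld !orbT.
  have FaU := hP2 _ uP2; have FbV := hP1 _ vP1.
  have memQ : ((ck \in (move Z' N).1) && (dl \in (move Z' N).1)) ||
              ((ck \in (move Z' N).2) && (dl \in (move Z' N).2)).
    rewrite !mem_move1 !mem_move2 ckc dld (negbTE ckd) (negbTE dlc) /=.
    by move: hcnt; case: (ck \in N); case: (dl \in N).
  have lam := lam_part vu hQ2 hQ1 memQ.
  rewrite !addn0 in e1; rewrite addn1 addn0 in e2; move/succn_inj: e2 => e2.
  rewrite e1 in FaU; rewrite e2 e in FbV.
  exact: (arith1 FaU FbV (anti Z.2 ck dl (ltnW vu)) (anti Z.1 ck dl (ltnW vu))
          (bnd dl) (bnd ck) (tot dl) (tot ck) lam).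
-
  have vu : ck < dl.
    by rewrite ltn_neqAle eq_sym nd /= (hlk e).
  have hM : forall z, (z \in [:: ck; dl]) = (z == dl) || (z == ck).
    by move=> z; rewrite !inE orbC.
  have e1 := move_c1 (fun z => dl < z) Z' ([:: ck; dl]).
  rewrite (cntM0 _ vu hM) (cntM0 _ vu hM) Gcv in e1.
  have e2 := move_c2 (fun z => ck < z) Z' ([:: ck; dl]).
  rewrite (cntM1 _ vu hM) (cntM1 _ vu hM) cnt1 // cnt1 // dld (negbTE dlc) Gdu in e2.
  have uP1 : dl \in (move Z' ([:: ck; dl])).1 by rewrite mem_move1 hM eqxx dld !orbT.
  have vP2 : ck \in (move Z' ([:: ck; dl])).2 by rewrite mem_move2 hM eqxx ckc !orbT.
  have FbU := hP1 _ uP1; have FaV := hP2 _ vP2.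
  have memQ : ((dl \in (move Z' N).1) && (ck \in (move Z' N).1)) ||
              ((dl \in (move Z' N).2) && (ck \in (move Z' N).2)).
    rewrite !mem_move1 !mem_move2 ckc dld (negbTE ckd) (negbTE dlc) /=.
    by move: hcnt; case: (ck \in N); case: (dl \in N).
  have lam := lam_part vu hQ2 hQ1 memQ.
  rewrite !addn0 in e1; rewrite addn1 addn0 -e in e2; move/succn_inj: e2 => e2.
  rewrite e1 -addn1 in FbU; rewrite e2 in FaV.
  exact: (arith2 FbU FaV (anti Z.2 dl ck (ltnW vu)) (anti Z.1 dl ck (ltnW vu))
          (bnd ck) (bnd dl) (tot ck) (tot dl) lam).
Qed.
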